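(* Let $p$ be a prime, let $\alpha$ be a nonnegative integer, and let $G$ be a finite $p$-group of order $p^{\alpha+1}$ having a cyclic subgroup of order $p^{\alpha}$. Then $n_G=\exp(G)$ if and only if either $G$ is cyclic, or $\exp(G)=p$, or ($p=2$ and) $G\cong D_{2^{\alpha+1}}=\langle x,y \mid x^{2^{\alpha}}=y^2=1,\ x^y=x^{-1}\rangle$.
   Context: For a finite group $G$ and $x\in G$, let $I_{\mathcal C}(x)=\{y\in G : \langle x,y\rangle \text{ is cyclic}\}$. For a nontrivial finite group $G$, $n_G=\max\{|I_{\mathcal C}(x)| : x\in G\setminus\{1\}\}$. $\exp(G)$ denotes the exponent of $G$. *)

(* Defs.v *)
From mathcomp Require Import all_boot all_order all_fingroup all_solvable.
Set Implicit Arguments. Unset Strict Implicit. Unset Printing Implicit Defensive.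
Local Open Scope group_scope.

Definition I_C (gT : finGroupType) (G : {set gT}) (x : gT) : {set gT} :=
  [set y in G | cyclic <<[set x; y]>>].

Definition n_G (gT : finGroupType) (G : {set gT}) : nat :=
  \max_(x in G^#) #|I_C G x|.

(* Main.v *)
Require Import Defs.
From mathcomp Require Import all_boot all_order all_fingroup all_solvable.
Set Implicit Arguments. Unset Strict Implicit. Unset Printing Implicit Defensive.
Local Open Scope group_scope.

Lemma IC_sub (gT : finGroupType) (G : {group gT}) x : I_C G x \subset G.
Proof. by apply/subsetP=> y; rewrite inE => /andP[]. Qed.

Lemma IC_cycle (gT : finGroupType) (G : {group gT}) x :
  x \in G -> <[x]> \subset I_C G x.
Proof.
move=> Gx; apply/subsetP=> y xy; rewrite inE.
have sxG: <[x]> \subset G by rewrite cycle_subG.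
rewrite (subsetP sxG) //=.
apply: cyclicS (cycle_cyclic x).
by rewrite gen_subG subUset !sub1set cycle_id xy.
Qed.

Lemma nG_ge (gT : finGroupType) (G : {group gT}) x :
  x \in G^# -> #|I_C G x| <= n_G G.
Proof. by move=> Gx; exact: (leq_bigmax_cond x Gx). Qed.

Lemma nG_le (gT : finGroupType) (G : {group gT}) m :
  (forall x, x \in G^# -> #|I_C G x| <= m) -> n_G G <= m.
Proof. by move=> H; apply/bigmax_leqP. Qed.

Lemma nG_ge_exp (gT : finGroupType) (G : {group gT}) :
  nilpotent G -> G :!=: 1 -> exponent G <= n_G G.
Proof.
move=> nilG ntG; have [x Gx ex] := exponent_witness nilG.
have x1: x != 1.
  apply: contraNneq ntG => x1; apply/eqP/trivgP/subsetP=> g Gg.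
  have: #[g] %| exponent G by apply: dvdn_exponent.
  by rewrite ex x1 order1 dvdn1 order_eq1 => /eqP->; rewrite inE.
apply: leq_trans (nG_ge (x:=x) _); last by rewrite !inE x1.
rewrite ex [#[x]]orderE subset_leq_card // IC_cycle //.
 
Qed.

Lemma nG_cyclic (gT : finGroupType) (G : {group gT}) :
  cyclic G -> G :!=: 1 -> n_G G = exponent G.
Proof.
move=> cG ntG; rewrite exponent_cyclic //; apply/eqP; rewrite eqn_leq.
rewrite nG_le /=; last by move=> x _; rewrite subset_leq_card // IC_sub.
have [g defG] := cyclicP cG.
have g1: g != 1 by apply: contraNneq ntG => g1; rewrite defG g1 cycle1.
have Gg: g \in G by rewrite defG cycle_id.
apply: leq_trans (nG_ge (x:=g) _); last by rewrite !inE g1.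
by rewrite {1}defG subset_leq_card // IC_cycle.
Qed.

Lemma nG_expp (gT : finGroupType) (G : {group gT}) p :
  prime p -> exponent G = p -> n_G G = p.
Proof.
move=> pp eG; have ordp x : x \in G -> x != 1 -> #[x] = p.
  move=> Gx x1; apply/prime_nt_dvdP; rewrite ?order_eq1 //.
  by rewrite -eG dvdn_exponent.
apply/eqP; rewrite eqn_leq; apply/andP; split.
  apply: nG_le => x; rewrite !inE => /andP[x1 Gx].
  rewrite -(ordp x Gx x1) [#[x]]orderE subset_leq_card //.
  apply/subsetP=> y; rewrite inE => /andP[Gy cH].
  set H := <<[set x; y]>> in cH.
  have sxH: <[x]> \subset H by rewrite cycle_subG mem_gen // !inE eqxx.
  have yH: y \in H by rewrite mem_gen // !inE eqxx orbT.
  suff: <[x]> == H :> {set gT} by move/eqP->.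
  rewrite eqEcard sxH /= -orderE (ordp x Gx x1) -eG -(exponent_cyclic cH).
  apply: dvdn_leq; first by rewrite eG prime_gt0.
  by apply: exponentS; rewrite gen_subG subUset !sub1set Gx Gy.
have [G1|] := eqsVneq G 1.
  by move: eG; rewrite G1 exponent1 => p1; rewrite -p1 in pp.
case/trivgPn=> x Gx x1; apply: leq_trans (nG_ge (x:=x) _); last by rewrite !inE x1.
by rewrite -(ordp x Gx x1) [#[x]]orderE subset_leq_card // IC_cycle.
Qed.

Lemma cyc2 (gT : finGroupType) (w : gT) : w ^+ 2 = 1 -> <[w]> \subset [set 1; w].
Proof.
move=> w2; apply/subsetP=> b /cycleP[k ->]; rewrite -(expg_mod k w2).
have: k %% 2 < 2 by rewrite ltn_mod.
by case: (k %% 2) => [|[|]] //= _; rewrite !inE ?expg0 ?expg1 eqxx ?orbT.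
Qed.

Lemma nG_dih (gT : finGroupType) (G : {group gT}) (x y : gT) m :
  <[x]> <*> <[y]> = G -> x ^+ m = 1 -> y ^+ 2 = 1 -> x ^ y = x^-1 -> 2 <= m ->
  forall g, g \in G^# -> #|I_C G g| <= m.
Proof.
move=> defG xm y2 xy m2.
set X := <[x]>.
have yV: y^-1 = y by apply/eqP; rewrite eq_invg_mul -[y * y]/(y ^+ 2) y2.
have nXy: <[y]> \subset 'N(X).
  rewrite cycle_subG; apply/normP; rewrite /X -cycleJ xy.
  by rewrite cycleV.
have invo g : g \in G -> g \notin X -> g ^+ 2 = 1.
  rewrite -defG norm_joinEr // => /mulsgP[a b Xa yb ->{g}].
  move/subsetP: (cyc2 y2) => /(_ b yb); rewrite !inE => /orP[/eqP->|/eqP->].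
    by rewrite mulg1 Xa.
  move=> _; case/cycleP: Xa => i ->.
  have: (x ^+ i) ^ y = (x ^+ i)^-1 by rewrite conjXg xy expgVn.
  rewrite /conjg yV => e.
  by rewrite expgS expg1 -mulgA e mulgV.
have sXG: X \subset G by rewrite -defG joing_subl.
move=> g; rewrite !inE => /andP[g1 Gg].
have cycw h : h \in I_C G g -> exists w, [/\ w \in G, g \in <[w]> & h \in <[w]>].
  rewrite inE => /andP[Gh /cyclicP[w defH]].
  have Hw: w \in <<[set g; h]>> by rewrite defH cycle_id.
  exists w; split; rewrite -?defH ?mem_gen ?inE ?eqxx ?orbT //.
  by apply: (subsetP _ _ Hw); rewrite gen_subG subUset !sub1set Gg Gh.
have [Xg|nXg] := boolP (g \in X).
  apply: (@leq_trans #|X|); last first.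
    by rewrite -orderE dvdn_leq ?(leq_trans _ m2) // order_dvdn xm.
  apply: subset_leq_card; apply/subsetP=> h /cycw[w [Gw gw hw]].
  have [Xw|nXw] := boolP (w \in X).
    by apply: (subsetP _ _ hw); rewrite cycle_subG.
  move/subsetP: (cyc2 (invo w Gw nXw)) => /(_ g gw); rewrite !inE.
  by rewrite (negPf g1) /= => /eqP gw'; rewrite -gw' Xg in nXw.
suff sub: I_C G g \subset [set 1; g].
  apply: leq_trans (subset_leq_card sub) _; rewrite cards2.
  case: (1 != g); [exact: m2|exact: (ltnW m2)].
apply/subsetP=> h /cycw[w [Gw gw hw]].
have nXw: w \notin X.
  by apply: contra nXg => Xw; apply: (subsetP _ _ gw); rewrite cycle_subG.
have sw := subsetP (cyc2 (invo w Gw nXw)).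
move: (sw g gw); rewrite !inE (negPf g1) /= => /eqP gw'.
by move: (sw h hw); rewrite gw' !inE.
Qed.

Lemma fwd (gT : finGroupType) (G : {group gT}) p k (c : gT) :
  prime p -> #|G| = (p ^ k.+3)%N -> c \in G -> #[c] = (p ^ k.+2)%N ->
  n_G G <= p ^ k.+2 ->
  p = 2 /\ exists y, [/\ y \in G, <[c]> <*> <[y]> = G, y ^+ 2 = 1 & c ^ y = c^-1].
Proof.
move=> pp oG Gc oc nGle.
have p1 := prime_gt1 pp; have p0 := prime_gt0 pp.
set C := <[c]>.
have sCG : C \subset G by rewrite cycle_subG.
have oC : #|C| = (p ^ k.+2)%N by rewrite -orderE.
set z := c ^+ (p ^ k.+1).
have oz : #[z] = p.
  rewrite orderXdiv oc; first by rewrite (expnS p k.+1) mulnK // expn_gt0 p0.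
  by rewrite dvdn_exp2l.
have Cz : z \in C by rewrite mem_cycle.
have ICz g : g \in G -> cyclic <<[set z; g]>> -> g \in C.
  move=> Gg cg.
  have sCI : C \subset I_C G z.
    apply/subsetP=> h Ch; rewrite inE (subsetP sCG) //=.
    apply: cyclicS (cycle_cyclic c).
    by rewrite gen_subG subUset !sub1set Cz Ch.
  have: C == I_C G z.
    rewrite eqEcard sCI oC (leq_trans _ nGle) // nG_ge // !inE (subsetP sCG) //.
    by rewrite andbT -order_gt1 oz.
  by move/eqP->; rewrite inE Gg.
have outC g : g \in G -> g \notin C -> <[g]> :&: C = 1 /\ #[g] = p.
  move=> Gg nCg.
  have TI : <[g]> :&: C = 1.
    apply/trivgP/subsetP=> w /setIP[gw Cw]; rewrite inE; apply/negPn/negP=> w1.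
    case/negP: nCg; apply: (ICz g Gg); apply: cyclicS (cycle_cyclic g).
    rewrite gen_subG subUset !sub1set cycle_id andbT.
    have szw : <[z]> \subset <[w]>.
      rewrite -(cardSg_cyclic (cycle_cyclic c)) ?cycle_subG //.
      have: #[w] %| p ^ k.+2 by rewrite -oC order_dvdG.
      case/(dvdn_pfactor _ _ pp) => m _ ow.
      rewrite -!orderE oz ow; case: m ow => [|m] ow.
        by move/eqP: ow; rewrite expn0 order_eq1 (negPf w1).
      by rewrite expnS dvdn_mulr.
    by rewrite -cycle_subG (subset_trans szw) // cycle_subG.
  split=> //.
  have: #[g] * p ^ k.+2 <= p * p ^ k.+2.
    rewrite -expnS -oG -oC /order -(TI_cardMg TI) subset_leq_card //.
    by rewrite mul_subG // cycle_subG.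
  rewrite leq_pmul2r ?expn_gt0 ?p0 // => ogp.
  have: #[g] %| p ^ k.+3 by rewrite -oG order_dvdG.
  case/(dvdn_pfactor _ _ pp) => m _ og; rewrite og.
  case: m og ogp => [|[|m]] og ogp.
  - by move: og; rewrite expn0 => /eqP; rewrite order_eq1 => /eqP g1; rewrite g1 group1 in nCg.
  - by rewrite expn1.
  - by move: ogp; rewrite og -{2}(expn1 p) leq_exp2l.
have [y Gy nCy] : exists2 y, y \in G & y \notin C.
  apply/subsetPn/negP => sGC; move: (subset_leq_card sGC).
  by rewrite oG oC leq_exp2l // ltnn.
have [TIy oy] := outC y Gy nCy.
have [p2|p2] := eqVneq p 2.
  move: p2 pp oG oc nGle p1 p0 oC ICz outC oz oy TIy => -> pp oG oc nGle p1 p0 oC ICz outC oz oy TIy.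
  have ncy: c * y \notin C by rewrite groupMl // cycle_id.
  have [_ ocy] := outC (c * y) (groupM Gc Gy) ncy.
  have y2: y ^+ 2 = 1 by rewrite -oy expg_order.
  have cy2: (c * y) ^+ 2 = 1 by rewrite -ocy expg_order.
  have yV: y^-1 = y by apply/eqP; rewrite eq_invg_mul -[y * y]/(y ^+ 2) y2.
  split => //; exists y; split => //.
    apply/eqP; rewrite eqEcard join_subG !cycle_subG Gc Gy /= oG.
    rewrite (leq_trans _ (subset_leq_card (mul_subG (joing_subl C <[y]>) (joing_subr C <[y]>)))) //.
    by rewrite TI_cardMg ?(setIC C) // oC -orderE oy expnSr.
  by apply: (mulgI c); rewrite /conjg yV mulgV mulgA; exact: cy2.
exfalso.
have p3 : 2 < p by rewrite ltn_neqAle eq_sym p2 p1.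
have pG : p.-group G by rewrite pgroupE oG pnatX pnat_id.
set d := c ^+ (p ^ k).
have od : #[d] = (p ^ 2)%N.
  rewrite orderXdiv oc; last by apply: dvdn_exp2l; rewrite leqW.
  by rewrite -(addn2 k) expnD mulKn // expn_gt0 p0.
have Cd : d \in C by rewrite mem_cycle.
have Gd : d \in G by rewrite (subsetP sCG).
set D := <[d]>.
have nCG : C <| G.
  apply: p_maximal_normal pG _; apply: p_index_maximal => //.
  by rewrite -divgS // oG oC expnS mulnK ?expn_gt0 ?p0.
have nDG : D <| G.
  apply: char_normal_trans nCG; apply: cycle_subgroup_char.
  by rewrite cycle_subG.
set K := [~: D, G].
have prK : K \proper D.
  apply: nil_comm_properl (pgroup_nil pG) _ _ _.
  - by rewrite cycle_subG.
  - by rewrite -cardG_gt1 -orderE od (ltn_exp2l 0).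
  - by rewrite subsetI subxx normal_norm.
have oK : #|K| %| p.
  have: #|K| %| p ^ 2 by rewrite -od orderE cardSg ?proper_sub.
  case/(dvdn_pfactor _ _ pp) => m; case: m => [|[|[|m]]] // _ oK; rewrite oK ?dvd1n //.
  by move: (proper_card prK); rewrite oK -orderE od ltnn.
have sKG : K \subset G.
  by rewrite /K commg_subr (subset_trans _ (normG G)) // cycle_subG.
have ZK : K \subset 'Z(G).
  have [K1|ntK] := eqsVneq K 1; first by rewrite K1 sub1G.
  have K1 : #|K| != 1%N by rewrite gtn_eqF // cardG_gt1.
  have oKp : #|K| = p := elimT (prime_nt_dvdP pp K1) oK.
  have pK : prime #|K| by rewrite oKp.
  have nKG : K <| G by rewrite /normal sKG commg_normr.
  apply: contraR (meet_center_nil (pgroup_nil pG) nKG ntK) => nZK.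
  by rewrite prime_TIg // eqxx.
set u := [~ d, y].
have Ku : u \in K by rewrite mem_commg // cycle_id.
have /centerP[_ cGu] : u \in 'Z(G) by rewrite (subsetP ZK).
have cdu : commute d u by apply: commute_sym; apply: cGu.
have cyu : commute y u by apply: commute_sym; apply: cGu.
have := expMg_Rmul p cdu cyu.
have nCyd : y * d \notin C by rewrite groupMr.
have [_ oyd] := outC _ (groupM Gy Gd) nCyd.
have y1 : y ^+ p = 1 by rewrite -oy expg_order.
have yd1 : (y * d) ^+ p = 1 by rewrite -oyd expg_order.
rewrite yd1 y1 mul1g -/u.
have uC : u ^+ 'C(p, 2) = 1.
  apply/eqP; rewrite -order_dvdn (dvdn_trans (order_dvdG Ku)) //.
  by rewrite (dvdn_trans oK) // prime_dvd_bin.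
rewrite uC mulg1 => /esym/eqP; rewrite -order_dvdn od -{2}(expn1 p) dvdn_Pexp2l //.
Qed.

Theorem proposition2p7 (gT : finGroupType) (G : {group gT}) (p alpha : nat) :
  prime p ->
  #|G| = (p ^ alpha.+1)%N ->
  (exists2 C : {group gT}, C \subset G & cyclic C /\ #|C| = (p ^ alpha)%N) ->
  (n_G G = exponent G <->
     [\/ cyclic G,
         exponent G = p
       | p = 2 /\
         G \isog Grp (x : y : (x ^+ (2 ^ alpha), y ^+ 2, x ^ y = x^-1))]).
Proof.
move=> pp oG [C sCG [cC oC]].
have p1 := prime_gt1 pp; have p0 := prime_gt0 pp.
have [c defC] := cyclicP cC.
have Gc : c \in G by rewrite (subsetP sCG) // defC cycle_id.
have oc : #[c] = (p ^ alpha)%N by rewrite orderE -defC.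
have ntG : G :!=: 1.
  by rewrite -cardG_gt1 oG -(expn0 p) ltn_exp2l.
have pG : p.-group G by rewrite pgroupE oG pnatX pnat_id.
have ceG : #[c] %| exponent G by apply: dvdn_exponent.
have ge := nG_ge_exp (pgroup_nil pG) ntG.
case: alpha oG oC oc => [|a] oG oC oc.
  have cG : cyclic G by apply: prime_cyclic; rewrite oG expn1.
  by split=> _; [apply: Or31 | apply: nG_cyclic].
split.
  move=> nGe.
  have [cG|ncG] := boolP (cyclic G); first by apply: Or31.
  have [eP|neP] := eqVneq (exponent G) p; first by apply: Or32.
  have : exponent G %| p ^ a.+2 by rewrite -oG exponent_dvdn.
  case/(dvdn_pfactor _ _ pp) => m; rewrite leq_eqVlt ltnS => /orP[/eqP-> eG|lem eG].
    case/negP: ncG; have [x Gx ex] := exponent_witness (pgroup_nil pG).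
    apply/cyclicP; exists x; apply/eqP; rewrite eq_sym eqEcard cycle_subG Gx /=.
    by rewrite -orderE -ex eG oG.
  have ma : m = a.+1.
    apply/eqP; rewrite eqn_leq lem /= -(dvdn_Pexp2l _ _ p1) -eG -oc //.
  case: a oG oC oc lem eG ma => [|k] oG oC oc lem eG ma.
    by rewrite eG ma expn1 eqxx in neP.
  have nGle : n_G G <= p ^ k.+2 by rewrite nGe eG ma.
  have [p2 [y [Gy defG y2 cy]]] := fwd pp oG Gc oc nGle.
  apply: Or33; split=> //.
  have D := @Grp_2dihedral k.+3 isT.
  apply: (isoGrp_trans _ D); apply/(isoGrpP _ D); split.
    by rewrite card_2dihedral // oG p2.
  apply/existsP; exists (c, y); rewrite /= !xpair_eqE /=.
  by rewrite defG y2 cy -p2 -oc expg_order !eqxx.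
case=> [cG | eP | [p2 iso]].
- by apply: nG_cyclic.
- by rewrite eP; apply: nG_expp.
have := isoGrp_hom iso; case/existsP=> [[x y]]; rewrite /= !xpair_eqE /=.
case/and4P=> /eqP defG /eqP xm /eqP y2 /eqP xy.
apply/eqP; rewrite eqn_leq ge andbT; apply: nG_le => g Gg.
apply: leq_trans (nG_dih defG xm y2 xy _ Gg) _.
  by rewrite -(expn1 2) leq_exp2l.
by rewrite -p2 -oc dvdn_leq ?exponent_gt0.
Qed.
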